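(* Let $r>1$ and integers $N\ge1$, $K\ge2$, and let $\mathcal{A}=\{\emptyset,\{1\},\dots,\{N\}\}$ (single item auction). Then the worst case efficiency loss ratio with possibly different priors satisfies $$\eta(r,K;\mathcal{A})\ge\frac{\gamma^*(r,K,1)-\left(1-\frac1r\right)}{1+\gamma^*(r,K,1)},\qquad\text{where } \gamma^*(r,K,1)=(K-1)\left(1-r^{-\frac1{K-1}}\right).$$
   Context: Buyer $n\in\{1,\dots,N\}$ has type $X_n$, a discrete random variable taking values $0<x_n^1<\dots<x_n^{K_n}$ with probabilities $p_n^i>0$; $X_1,\dots,X_N$ independent. An allocation rule $\pi$ maps each bid vector $v$ ($v_n\in\{x_n^1,\dots,x_n^{K_n}\}$) to a probability distribution on $\mathcal{A}$; $Q_n(v)=\sum_{A\ni n}\pi_A(v)$. Virtual valuation: $w_n(x_n^i)=x_n^i-(x_n^{i+1}-x_n^i)\frac{\sum_{j>i}p_n^j}{p_n^i}$ for $i<K_n$, $w_n(x_n^{K_n})=x_n^{K_n}$. Monotone virtual valuation: with $(g_n^0,h_n^0)=(0,-x_n^1)$, $(g_n^i,h_n^i)=(\sum_{j\le i}p_n^j,-x_n^{i+1}\sum_{j>i}p_n^j)$ for $1\le i\le K_n-1$, $(g_n^{K_n},h_n^{K_n})=(1,0)$, let $\overline{h}_n^i$ be the value at $g_n^i$ of the lower convex hull of these points and $\overline{w}_n(x_n^i)=(\overline{h}_n^i-\overline{h}_n^{i-1})/(g_n^i-g_n^{i-1})$. An allocation rule is optimal (allocation rule of a revenue-maximizing Bayesian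 incentive compatible, individually rational mechanism) if for every $v$, $\pi(v)$ is supported on $\arg\max_{A\in\mathcal{A}}\sum_{n\in A}\overline{w}_n(v_n)$, with consistent tie-breaking: if $v_n<v_n'$ and $\overline{w}_n(v_n)=\overline{w}_n(v_n')$ then $Q_n(v_n,v_{-n})\le Q_n(v_n',v_{-n})$. $\tilde\pi^o$ is an optimal allocation rule maximizing realized welfare $\mathbb{E}[\sum_nQ_n(X)X_n]$ among optimal rules. $\mathrm{MSW}=\mathbb{E}[\max_nX_n]$, $\mathrm{ELR}(\pi)=(\mathrm{MSW}-\mathbb{E}[\sum_nQ_n(X)X_n])/\mathrm{MSW}$. $\mathcal{D}_{r,K}$: all such type distributions with $K_n\le K$, $x_n^1>0$, $p_n^i>0$, $(\max_nx_n^{K_n})/(\min_nx_n^1)\le r$; $\eta(r,K;\mathcal{A})=\sup_{\mathcal{D}_{r,K}}\mathrm{ELR}(\tilde\pi^o)$. *)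

(* Defs.v *)
From HB Require Import structures.
From mathcomp Require Import all_boot all_order all_algebra.
From mathcomp Require Import boolp classical_sets reals exp.


Import Order.TTheory GRing.Theory Num.Theory.
Local Open Scope ring_scope.
Local Open Scope classical_set_scope.

(* Buyer n has Kn n types;
   type index k : 'I_(Kn n) (0-based) stands for the paper's x_n^{k+1},
   with value xv n k and probability pr n k.  Independence of the X_n is
   encoded by the product form of the profile probability [prob]. *)
Record instance (R : realType) (N : nat) := Instance {
  Kn : 'I_N -> nat ;
  xv : forall n : 'I_N, 'I_(Kn n) -> R ;
  pr : forall n : 'I_N, 'I_(Kn n) -> R }.
Arguments Kn {R N} i _ : rename.
Arguments xv {R N} i _ _ : rename.
Arguments pr {R N} i _ _ : rename.

Definition profile {R : realType} {N : nat} (I : instance R N) : finType :=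
  {dffun forall n : 'I_N, 'I_(Kn I n)}.

(* x_n^{k+1} and p_n^{k+1} accessed by a natural number k (0 if out of range) *)
Definition xat {R : realType} {N : nat} (I : instance R N) (n : 'I_N) (k : nat) : R :=
  if (insub k : option 'I_(Kn I n)) is Some j then xv I n j else 0.

(* The points (g_n^i, h_n^i), i = 0 .. K_n (paper's 1-based indices). *)
Definition gpt {R : realType} {N : nat} (I : instance R N) (n : 'I_N) (i : nat) : R :=
  if i == 0%N then 0
  else if (i < Kn I n)%N then \sum_(j < Kn I n | (j < i)%N) pr I n j
  else 1.

Definition hpt {R : realType} {N : nat} (I : instance R N) (n : 'I_N) (i : nat) : R :=
  if i == 0%N then - xat I n 0
  else if (i < Kn I n)%N then - xat I n i * \sum_(j < Kn I n | (i <= j)%N) pr I n j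
  else 0.

(* value at g_n^i of the lower convex hull of the points (g_n^j, h_n^j) *)
Definition hbar {R : realType} {N : nat} (I : instance R N) (n : 'I_N) (i : nat) : R :=
  inf [set y : R | exists lam : 'I_(Kn I n).+1 -> R,
         [/\ (forall j, 0 <= lam j),
             \sum_j lam j = 1,
             \sum_j lam j * gpt I n j = gpt I n i &
             y = \sum_j lam j * hpt I n j]].

(* monotone virtual valuation of type x_n^{k+1} (paper index i = k+1) *)
Definition wbar {R : realType} {N : nat} (I : instance R N) (n : 'I_N) (k : 'I_(Kn I n)) : R :=
  (hbar I n k.+1 - hbar I n k) / (gpt I n k.+1 - gpt I n k).

(* Single item auction: the outcome set {emptyset, {1}, ..., {N}} is
   option 'I_N (None = emptyset, Some n = {n}). *)
Definition alloc {R : realType} {N : nat} (I : instance R N) :=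
  profile I -> option 'I_N -> R.

Definition is_alloc {R : realType} {N : nat} (I : instance R N) (pi : alloc I) :=
  forall v, (forall a, 0 <= pi v a) /\ \sum_a pi v a = 1.

Definition Q {R : realType} {N : nat} (I : instance R N) (pi : alloc I)
  (n : 'I_N) (v : profile I) : R := pi v (Some n).

(* sum_{n in A} wbar_n(v_n) *)
Definition score {R : realType} {N : nat} (I : instance R N) (v : profile I)
  (a : option 'I_N) : R :=
  if a is Some n then wbar I n (v n) else 0.

Definition is_optimal {R : realType} {N : nat} (I : instance R N) (pi : alloc I) :=
  [/\ is_alloc I pi,
      (forall v a, 0 < pi v a -> forall b, score I v b <= score I v a) &
      (forall n (v v' : profile I), (forall m, m != n -> v m = v' m) ->
         xv I n (v n) < xv I n (v' n) -> wbar I n (v n) = wbar I n (v' n) ->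
         Q I pi n v <= Q I pi n v')].

Definition prob {R : realType} {N : nat} (I : instance R N) (v : profile I) : R :=
  \prod_n pr I n (v n).

Definition welfare {R : realType} {N : nat} (I : instance R N) (pi : alloc I) : R :=
  \sum_(v : profile I) prob I v * \sum_n Q I pi n v * xv I n (v n).

Definition MSW {R : realType} {N : nat} (I : instance R N) : R :=
  \sum_(v : profile I) prob I v * \big[Num.max/0]_n xv I n (v n).

Definition ELR {R : realType} {N : nat} (I : instance R N) (pi : alloc I) : R :=
  (MSW I - welfare I pi) / MSW I.

Definition is_tilde_opt {R : realType} {N : nat} (I : instance R N) (pi : alloc I) :=
  is_optimal I pi /\ forall pi' : alloc I, is_optimal I pi' -> welfare I pi' <= welfare I pi.

Definition in_D {R : realType} {N : nat} (r : R) (K : nat) (I : instance R N) :=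
  (forall n : 'I_N,
     [/\ (0 < Kn I n)%N, (Kn I n <= K)%N, (forall i, 0 < xv I n i) &
         (forall i j : 'I_(Kn I n), (i < j)%N -> xv I n i < xv I n j)] /\
     (forall i, 0 < pr I n i) /\
         \sum_i pr I n i = 1) /\
  (forall (n m : 'I_N) (i : 'I_(Kn I n)) (j : 'I_(Kn I m)), xv I n i / xv I m j <= r).

Definition gamma_star {R : realType} (r : R) (K : nat) : R :=
  (K.-1)%:R * (1 - powR r (- ((K.-1)%:R)^-1)).

(* Main.v *)
Require Import Defs.
From HB Require Import structures.
From mathcomp Require Import all_boot all_order all_algebra.
From mathcomp Require Import boolp classical_sets reals exp.
From mathcomp Require Import ring lra.
Import Order.TTheory GRing.Theory Num.Theory.
Local Open Scope ring_scope.
Lemma final_ineq (R : realType) (r rho c eps w0 l : R) :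
  1 < r -> 1 < rho -> 1 < c -> c < 1 + eps -> c < r -> 0 <= w0 -> w0 <= 1 -> 0 <= l -> 0 < eps ->
  ((l + 1) * (1 - rho^-1) - (1 - r^-1)) / (1 + (l + 1) * (1 - rho^-1)) - eps <
  ((l * (1 - rho^-1) + (1 - c / rho) + c) - (c + w0 * (1 - c / r))) /
   (l * (1 - rho^-1) + (1 - c / rho) + c).
Proof.
move=> hr hrho hc hce hcr hw0 hw1 hl he.
set a := rho^-1. set b := r^-1.
have ha0 : 0 < a by rewrite invr_gt0; lra.
have ha1 : a < 1 by rewrite invf_lt1 //; lra.
have hb0 : 0 < b by rewrite invr_gt0; lra.
have hb1 : b < 1 by rewrite invf_lt1 //; lra.
set g := (l + 1) * (1 - a).
have hg : 0 <= g by rewrite mulr_ge0 //; lra.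
set G := 1 + g.
have hG : 0 < G by rewrite /G; lra.
set M := l * (1 - a) + (1 - c * a) + c.
have hM : M = G + (c - 1) * (1 - a) by rewrite /M /G /g; ring.
have hMG : G <= M.
  have : 0 <= (c - 1) * (1 - a) by rewrite mulr_ge0 //; lra.
  rewrite hM; lra.
have hM0 : 0 < M by lra.
set W := c + w0 * (1 - c * b).
have hp : c * b < 1.
  rewrite /b mulrC -/(r^-1 * c) mulrC ltr_pdivrMr; lra.
have hW0 : 0 <= W by rewrite /W addr_ge0 ?mulr_ge0 //; lra.
have step1 : (G - W) / G <= (M - W) / M.
  have e1 : (G - W) / G = 1 - W / G by rewrite mulrBl mulfV ?gt_eqF.
  have e2 : (M - W) / M = 1 - W / M by rewrite mulrBl mulfV ?gt_eqF.
  rewrite e1 e2 lerD2l lerN2 ler_wpM2l // lef_pV2 ?posrE //.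
apply: (lt_le_trans _ step1).
have e3 : (g - (1 - b)) / G - eps = (g - (1 - b) - eps * G) / G.
  by field; rewrite gt_eqF.
rewrite e3 ltr_pM2r ?invr_gt0 //.
have h1 : 0 <= (c - 1) * b by rewrite mulr_ge0 //; lra.
have h2 : 0 <= (1 - w0) * (1 - c * b) by rewrite mulr_ge0 //; lra.
have h3 : 0 <= eps * g by rewrite mulr_ge0 //; lra.
rewrite /W /G; move: h1 h2 h3; rewrite !mulrBl !mulrBr !mul1r !mulr1 !mulrDr !mulr1.
lra.
Qed.

Section Constr.
Variable R : realType.
Variables (r : R) (N L' : nat) (rho c : R).
Hypothesis hr : 1 < r.
Hypothesis hN : (0 < N)%N.
Hypothesis hrho1 : 1 < rho.
Hypothesis hrhoL : rho ^+ L'.+1 = r.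
Hypothesis hc1 : 1 < c.
Hypothesis hcr : c < rho.

Definition L := L'.+1.
Definition n0 : 'I_N := Ordinal hN.

Definition qB (j : nat) : R :=
  if (j < L)%N then (rho ^+ j)^-1 else if j == L then c / r else 0.
Definition Qf (n : 'I_N) (j : nat) : R := if n == n0 then qB j else (j == 0)%:R.
Definition X (n : 'I_N) (j : nat) : R := if n == n0 then rho ^+ j else 1.
Definition P (n : 'I_N) (j : nat) : R := Qf n j - Qf n j.+1.
Definition KK (n : 'I_N) : nat := (if n == n0 then L else 0).+1.
Definition inst : instance R N := @Instance R N KK (fun n k => X n k) (fun n k => P n k).

Lemma rho_gt0 : 0 < rho. Proof. have := hrho1; lra. Qed.
Lemma r_gt0 : 0 < r. Proof. have := hr; lra. Qed.

Lemma rhoX_ge1 j : 1 <= rho ^+ j.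
Proof. exact: exprn_ege1 (ltW hrho1). Qed.

Lemma rhoX_le_r j : (j <= L)%N -> rho ^+ j <= r.
Proof.
move=> hj; rewrite -hrhoL (ler_eXn2l hrho1) //.
Qed.

Lemma rL' : r = rho ^+ L' * rho.
Proof. by rewrite -hrhoL exprSr. Qed.

Lemma Qf0 n : Qf n 0 = 1.
Proof. by rewrite /Qf /qB; case: ifP => //= _; rewrite expr0 invr1. Qed.

Lemma QfK n : Qf n (KK n) = 0.
Proof.
rewrite /Qf /qB /KK; case: (n == n0) => //=.
by rewrite ltnNge leqnSn /= eqn_leq ltnn.
Qed.

Lemma P_gt0 n j : (j < KK n)%N -> 0 < P n j.
Proof.
rewrite /P /Qf /KK /qB; case: (n == n0) => /=; last first.
  by rewrite ltnS leqn0 => /eqP->; rewrite /= subr0 ltr01.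
have hp := rho_gt0.
have hc0 : 0 < c by apply: lt_trans hc1.
rewrite ltnS leq_eqVlt => /orP[/eqP->|].
  rewrite ltnn eqxx ltnNge leqnSn /= eqn_leq ltnn /= subr0.
  exact: divr_gt0 hc0 r_gt0.
move=> hjL; rewrite hjL.
case: (ltnP j.+1 L) => hj1.
  rewrite exprS invfM -[X in X - _]mul1r -mulrBl; apply: mulr_gt0.
    by rewrite subr_gt0 invf_lt1.
  by rewrite invr_gt0 exprn_gt0.
have hjL' : j = L'.
  by apply/eqP; rewrite eqn_leq -ltnS hjL.
rewrite hjL' eqxx rL' /L.
rewrite invfM mulrA [c / _]mulrC -mulrA -[X in X - _]mulr1 -mulrBr mulr_gt0 //.
  by rewrite invr_gt0 exprn_gt0.
by rewrite subr_gt0 ltr_pdivrMr // mul1r.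
Qed.

Lemma sumP_lt n m : \sum_(j < m) P n j = 1 - Qf n m.
Proof.
rewrite -(big_mkord xpredT (P n)).
have -> : \sum_(0 <= j < m) P n j = - \sum_(0 <= j < m) (Qf n j.+1 - Qf n j).
  rewrite -sumrN; apply: eq_bigr => j _; by rewrite /P opprB.
by rewrite telescope_sumr // Qf0 opprB.
Qed.

Lemma sumP_ge n i : (i <= KK n)%N ->
  \sum_(j < KK n | (i <= j)%N) P n j = Qf n i.
Proof.
move=> hi; rewrite (eq_bigl (fun j : 'I_(KK n) => true && (i <= j)%N)) //.
rewrite -(big_geq_mkord i (KK n) xpredT (P n)).
have -> : \sum_(i <= j < KK n) P n j = - \sum_(i <= j < KK n) (Qf n j.+1 - Qf n j).
  rewrite -sumrN; apply: eq_bigr => j _; by rewrite /P opprB.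
by rewrite telescope_sumr // QfK opprB subr0.
Qed.

Lemma sumP1 n : \sum_(j < KK n) P n j = 1.
Proof. by rewrite sumP_lt QfK subr0. Qed.

Lemma gptE n i : (i <= KK n)%N -> gpt inst n i = 1 - Qf n i.
Proof.
move=> hi; rewrite /gpt /=.
case: eqP => [->|_]; first by rewrite Qf0 subrr.
case: ltnP => hik.
  by rewrite -(big_ord_widen _ (P n) (ltnW hik)) sumP_lt.
have -> : i = KK n by apply/eqP; rewrite eqn_leq hi hik.
by rewrite QfK subr0.
Qed.

Lemma xatE n k : (k < KK n)%N -> xat inst n k = X n k.
Proof. by move=> hk; rewrite /xat insubT. Qed.

Lemma hptE n i : (i <= KK n)%N -> hpt inst n i = - (X n i * Qf n i).
Proof.
move=> hi; rewrite /hpt /=.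
case: eqP => [->|_]; first by rewrite Qf0 mulr1 xatE.
case: ltnP => hik.
  by rewrite sumP_ge ?(ltnW hik) // xatE // mulNr.
have -> : i = KK n by apply/eqP; rewrite eqn_leq hi hik.
by rewrite QfK mulr0 oppr0.
Qed.

Lemma hbar_char n i y0 (lam0 : 'I_(KK n).+1 -> R) al be :
  (forall j, 0 <= lam0 j) -> \sum_j lam0 j = 1 ->
  \sum_j lam0 j * gpt inst n j = gpt inst n i ->
  y0 = \sum_j lam0 j * hpt inst n j ->
  (forall j : 'I_(KK n).+1, al + be * gpt inst n j <= hpt inst n j) ->
  al + be * gpt inst n i = y0 ->
  hbar inst n i = y0.
Proof.
move=> l0 l1 lg ly hl hy; rewrite /hbar.
set E := (X in inf X).
have Ey0 : E y0 by exists lam0.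
have lb : lbound E y0.
  move=> y [lam [lp ls lgi ->]].
  rewrite -hy -lgi.
  have -> : al + be * \sum_j lam j * gpt inst n j =
      \sum_j lam j * (al + be * gpt inst n j).
    rewrite big_distrr /= -[X in X + _]mulr1 -ls big_distrr /= -big_split /=.
    by apply: eq_bigr => j _; rewrite mulrDr mulrCA mulrC.
  by apply: ler_sum => j _; apply: ler_wpM2l.
apply/le_anti/andP; split.
  by apply: ge_inf => //; exists y0.
by apply: lb_le_inf => //; exists y0.
Qed.

Lemma c_gt0 : 0 < c. Proof. have := hc1; lra. Qed.
Lemma c_lt_r : c < r.
Proof. apply: (lt_le_trans hcr); rewrite -[X in X <= _]expr1; apply: rhoX_le_r; by []. Qed.
Lemma cr_gt0 : 0 < c / r. Proof. exact: divr_gt0 c_gt0 r_gt0. Qed.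
Lemma cr_lt1 : c / r < 1. Proof. by rewrite ltr_pdivrMr ?r_gt0 // mul1r c_lt_r. Qed.

Lemma qBL : qB L = c / r.
Proof. by rewrite /qB ltnn eqxx. Qed.

Lemma qB_lt j : (j < L)%N -> qB j = (rho ^+ j)^-1.
Proof. by rewrite /qB => ->. Qed.

Lemma qB_big j : (L < j)%N -> qB j = 0.
Proof. by rewrite /qB => h; rewrite ltnNge ltnW //= gtn_eqF. Qed.

Lemma rhoV_gt_cr j : (j < L)%N -> c / r < (rho ^+ j)^-1.
Proof.
move=> hj; have hjL : (j <= L')%N by rewrite -ltnS.
have hp := rho_gt0.
have hpj : 0 < rho ^+ j by rewrite exprn_gt0.
rewrite rL' -(subnK hjL) exprD ltr_pdivrMr; last by rewrite !mulr_gt0 ?exprn_gt0.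
have -> : (rho ^+ j)^-1 * (rho ^+ (L' - j) * rho ^+ j * rho) = rho ^+ (L' - j) * rho.
  by field; rewrite gt_eqF.
apply: (lt_le_trans hcr); apply: ler_peMl; [exact: ltW | exact: rhoX_ge1].
Qed.

Lemma qB_ge0 j : 0 <= qB j.
Proof.
rewrite /qB; case: ifP => _; first by rewrite invr_ge0 exprn_ge0 // ltW // rho_gt0.
case: ifP => _ //; exact: ltW cr_gt0.
Qed.

Lemma qB_le1 j : qB j <= 1.
Proof.
rewrite /qB; case: ifP => _; first by rewrite invf_le1 ?rhoX_ge1 // exprn_gt0 // rho_gt0.
case: ifP => _; [exact: ltW cr_lt1 | exact: ler01].
Qed.

Lemma qB_geL j : (j <= L)%N -> c / r <= qB j.
Proof.
rewrite leq_eqVlt => /orP[/eqP->|hj]; first by rewrite qBL.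
by rewrite qB_lt // ltW // rhoV_gt_cr.
Qed.

Lemma KKn0 : KK n0 = L.+1. Proof. by rewrite /KK eqxx. Qed.
Lemma Qfn0 j : Qf n0 j = qB j. Proof. by rewrite /Qf eqxx. Qed.
Lemma Xn0 j : X n0 j = rho ^+ j. Proof. by rewrite /X eqxx. Qed.
Lemma KKn n : n != n0 -> KK n = 1%N. Proof. by rewrite /KK => /negbTE->. Qed.
Lemma Qfn n j : n != n0 -> Qf n j = (j == 0)%:R. Proof. by rewrite /Qf => /negbTE->. Qed.
Lemma Xn n j : n != n0 -> X n j = 1. Proof. by rewrite /X => /negbTE->. Qed.

Lemma sum_delta M (a : nat) (f : nat -> R) : (a < M)%N ->
  \sum_(j < M) ((j : nat) == a)%:R * f j = f a.
Proof.
move=> ha; rewrite (bigD1 (Ordinal ha)) //= eqxx mul1r big1 ?addr0 //.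
move=> j hj; suff /negbTE-> : (j : nat) != a by rewrite mul0r.
by apply: contra hj => /eqP hja; apply/eqP/val_inj.
Qed.

Lemma sum2 M a b u v (f : nat -> R) : (a < M)%N -> (b < M)%N ->
  \sum_(j < M) (u * ((j : nat) == a)%:R + v * ((j : nat) == b)%:R) * f j
  = u * f a + v * f b.
Proof.
move=> ha hb.
under eq_bigr do rewrite mulrDl -!mulrA.
by rewrite big_split /= -!big_distrr /= !sum_delta.
Qed.

Lemma hbar_delta n i al be : (i <= KK n)%N ->
  (forall j, (j <= KK n)%N -> al + be * gpt inst n j <= hpt inst n j) ->
  al + be * gpt inst n i = hpt inst n i ->
  hbar inst n i = hpt inst n i.
Proof.
move=> hi hl he.
apply: (@hbar_char n i _ (fun j : 'I_(KK n).+1 => ((j : nat) == i)%:R) al be).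
- by move=> j; rewrite ler0n.
- rewrite (eq_bigr (fun j : 'I_(KK n).+1 => ((j : nat) == i)%:R * (fun=> 1) j)); last by move=> j _; rewrite mulr1.
  by rewrite (@sum_delta (KK n).+1 i (fun=> 1)) // ltnS.
- by rewrite (@sum_delta (KK n).+1 i (gpt inst n)) ?ltnS.
- by rewrite (@sum_delta (KK n).+1 i (hpt inst n)) ?ltnS.
- by move=> j; apply: hl; rewrite -ltnS.
- exact: he.
Qed.

Definition m := (c - 1) / (1 - c / r).
Lemma m_gt0 : 0 < m.
Proof. by rewrite /m divr_gt0 // subr_gt0 ?cr_lt1 ?hc1. Qed.

Lemma hbar_n0_le i : (i <= L)%N -> hbar inst n0 i = -1 - m * (1 - qB i).
Proof.
move=> hi.
have hcr1 := cr_lt1. have hcr0 := cr_gt0. have hm := m_gt0.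
have hqi := qB_geL i hi. have hq1 := qB_le1 i.
pose t := (1 - qB i) / (1 - c / r).
have ht0 : 0 <= t by rewrite /t divr_ge0 // subr_ge0 // ltW.
have ht1 : t <= 1 by rewrite /t ler_pdivrMr ?subr_gt0 // mul1r lerD2l lerN2.
have hL : (L < (KK n0).+1)%N by rewrite KKn0 ltnS leqnSn.
have h0 : (0 < (KK n0).+1)%N by [].
have hXL : X n0 L * Qf n0 L = c.
  rewrite Xn0 Qfn0 qBL /L hrhoL; field; rewrite gt_eqF //; exact: r_gt0.
apply: (@hbar_char n0 i _ (fun j : 'I_(KK n0).+1 =>
   (1 - t) * ((j : nat) == 0%N)%:R + t * ((j : nat) == L)%:R) (-1) (- m)).
- move=> j; apply: addr_ge0; apply: mulr_ge0; rewrite ?ler0n ?subr_ge0 //.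
- rewrite (eq_bigr (fun j : 'I_(KK n0).+1 => ((1 - t) * ((j : nat) == 0%N)%:R + t * ((j : nat) == L)%:R) * (fun=> 1) j)); last by move=> j _; rewrite mulr1.
  by rewrite (@sum2 (KK n0).+1 0 L (1 - t) t (fun=> 1)) // !mulr1 subrK.
- have hL1 : (L <= KK n0)%N by rewrite KKn0.
  have hi1 : (i <= KK n0)%N by rewrite KKn0 leqW.
  rewrite (@sum2 (KK n0).+1 0 L (1 - t) t (gpt inst n0) h0 hL).
  rewrite (gptE n0 0 (leq0n _)) (gptE n0 L hL1) (gptE n0 i hi1) Qf0 !Qfn0 qBL.
  rewrite subrr mulr0 add0r /t mulfVK; first by [].
  by rewrite subr_eq0 eq_sym lt_eqF.
- have hL1 : (L <= KK n0)%N by rewrite KKn0.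
  rewrite (@sum2 (KK n0).+1 0 L (1 - t) t (hpt inst n0) h0 hL).
  rewrite (hptE n0 0 (leq0n _)) (hptE n0 L hL1) hXL Qf0 Xn0 expr0 mul1r.
  have hne : 1 - c / r != 0 by rewrite subr_eq0 eq_sym lt_eqF.
  have hrc : r - c != 0 by rewrite subr_eq0 gt_eqF // c_lt_r.
  rewrite /t /m; field; rewrite hrc andbT gt_eqF //; exact: r_gt0.
- move=> j; have hj1 : (j <= KK n0)%N by rewrite -ltnS ltn_ord.
  have hj : (j <= L.+1)%N by rewrite -KKn0.
  rewrite (gptE n0 j hj1) (hptE n0 j hj1) Qfn0 Xn0.
  case: (ltngtP j L) => hjL.
  + have hpj : 0 < rho ^+ j by rewrite exprn_gt0 // rho_gt0.
    rewrite qB_lt // mulfV ?gt_eqF //.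
    have := qB_le1 j; rewrite qB_lt // => hq.
    have hmg : 0 <= m * (1 - (rho ^+ j)^-1) by rewrite mulr_ge0 ?subr_ge0 // ltW.
    rewrite mulNr; lra.
  + have -> : (j : nat) = L.+1 by apply/eqP; rewrite eqn_leq hj hjL.
    rewrite qB_big // mulr0 oppr0; have := m_gt0; lra.
  + have hrc : 1 - c / r != 0 by rewrite subr_eq0 eq_sym lt_eqF.
    rewrite hjL -Xn0 -Qfn0 hXL Qfn0 qBL /m mulNr divfK; last exact: hrc.
    lra.
- have hi1 : (i <= KK n0)%N by rewrite KKn0 leqW.
  by rewrite (gptE n0 i hi1) Qfn0 mulNr.
Qed.

Lemma hbar_n0_top : hbar inst n0 L.+1 = 0.
Proof.
have hK : (L.+1 <= KK n0)%N by rewrite KKn0.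
rewrite (@hbar_delta n0 L.+1 (- r) r hK).
- by rewrite (hptE n0 _ hK) Qfn0 qB_big // mulr0 oppr0.
- move=> j hj; rewrite (gptE n0 j hj) (hptE n0 j hj) Qfn0 Xn0.
  have hq := qB_ge0 j.
  move: hj; rewrite KKn0 leq_eqVlt => /orP[/eqP->|hj].
    rewrite qB_big //; lra.
  have hx := rhoX_le_r j hj.
  have : rho ^+ j * qB j <= r * qB j by rewrite ler_wpM2r.
  lra.
- rewrite (gptE n0 _ hK) (hptE n0 _ hK) Qfn0 qB_big // mulr0; lra.
Qed.

Lemma hbar_oth n i : n != n0 -> (i <= 1)%N -> hbar inst n i = - (i == 0%N)%:R.
Proof.
move=> hn hi; have hi1 : (i <= KK n)%N by rewrite KKn.
rewrite (@hbar_delta n i (-1) 1 hi1).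
- by rewrite (hptE n _ hi1) Xn // Qfn // mul1r.
- move=> j hj; rewrite (gptE n j hj) (hptE n j hj) Xn // Qfn // mul1r mul1r.
  lra.
- rewrite (gptE n i hi1) (hptE n _ hi1) Xn // Qfn //; lra.
Qed.

Lemma wbarE n (k : 'I_(Kn inst n)) :
  wbar inst n k = if n == n0 then (if (k : nat) == L then r else - m) else 1.
Proof.
have hk : (k < KK n)%N := ltn_ord k.
rewrite /wbar; case: eqP => [hn|/eqP hn]; last first.
  have k0 : (k : nat) = 0%N by move: hk; rewrite KKn // ltnS leqn0 => /eqP.
  rewrite k0 !hbar_oth // (gptE n 1) ?KKn // (gptE n 0) ?KKn // !Qfn //= .
  have e1 : forall a b : R, a = 1 -> b = 1 -> a / b = 1.
    by move=> a b -> ->; rewrite divr1.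
  by apply: e1; rewrite /= ?mulr0n ?mulr1n; lra.
subst n; move: hk; rewrite KKn0 ltnS leq_eqVlt => /orP[/eqP hkL|hkL].
  rewrite hkL eqxx hbar_n0_top hbar_n0_le // (gptE n0 L.+1) ?KKn0 //.
  rewrite (gptE n0 L) ?KKn0 // !Qfn0 qBL (qB_big L.+1 (ltnSn L)) /m.
  have hrc : r - c != 0 by rewrite subr_eq0 gt_eqF // c_lt_r.
  have hr0 : r != 0 by rewrite gt_eqF // r_gt0.
  have hc0 : c != 0 by rewrite gt_eqF // c_gt0.
  have e : r - (r - c) = c by lra.
  field; by rewrite e hr0 hrc hc0.
rewrite (ltn_eqF hkL) (hbar_n0_le k.+1 hkL) (hbar_n0_le k (ltnW hkL)).
have hk1 : (k.+1 <= KK n0)%N by rewrite KKn0 ltnW.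
have hk0 : (k <= KK n0)%N by rewrite KKn0 ltnW // ltnW.
rewrite (gptE n0 k.+1 hk1) (gptE n0 k hk0) !Qfn0.
have hP := @P_gt0 n0 k; rewrite /P !Qfn0 KKn0 in hP.
have hne : qB k - qB k.+1 != 0.
  by rewrite gt_eqF //; apply: hP; rewrite ltnS ltnW.
have e1 : 1 - qB k.+1 - (1 - qB k) = qB k - qB k.+1 by lra.
have e2 : -1 - m * (1 - qB k.+1) - (-1 - m * (1 - qB k)) = - m * (qB k - qB k.+1).
  by rewrite mulNr !mulrBr; lra.
by rewrite e1 e2 mulfK.
Qed.

Lemma sum_option (F : option 'I_N -> R) :
  \sum_a F a = F None + \sum_n F (Some n).
Proof.
rewrite (bigD1 None) //=; congr (_ + _).
rewrite (@reindex_omap _ _ _ _ _ Some id) /=; last by case.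
by apply: eq_bigl => j; rewrite eqxx.
Qed.

Definition top (v : profile inst) : bool := (v n0 : nat) == L.
Definition pickO : option 'I_N := [pick n | n != n0].
Definition best (v : profile inst) : option 'I_N := if top v then Some n0 else pickO.
Definition pi : alloc inst := fun v a => (a == best v)%:R.
Definition valw (v : profile inst) (a : option 'I_N) : R :=
  if a is Some n then X n (v n) else 0.

Lemma scoreE v a : score inst v a =
  if a is Some n then (if n == n0 then (if top v then r else - m) else 1) else 0.
Proof.
case: a => // n; rewrite /score wbarE.
by case: eqP => [hn|hn] //; subst n.
Qed.

Lemma val_top v : top v -> X n0 (v n0) = r.
Proof. by rewrite /top Xn0 => /eqP->; rewrite hrhoL. Qed.

Lemma maxval v a : (forall b, score inst v b <= score inst v a) ->
  valw v a = valw v (best v).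
Proof.
have hm := m_gt0. have hr0 := r_gt0. have hr1 := hr.
move=> hmax; rewrite /best /valw.
case hT: (top v).
  move: (hmax (Some n0)); rewrite !scoreE eqxx hT.
  case: a hmax => [n|] hmax; last by lra.
  case: eqP => [->|_] // hle; lra.
rewrite /pickO; case: pickP => [n1 hn1|hno].
  move: (hmax (Some n1)); rewrite !scoreE (negbTE hn1).
  case: a hmax => [n|] hmax; last by lra.
  case: eqP => [->|/eqP hn] hle; first by rewrite hT in hle; lra.
  by rewrite !Xn.
case: a hmax => [n|] hmax //.
have /eqP hn : n == n0 by apply/negPn/negP => h; have := hno n; rewrite h.
move: (hmax None); rewrite !scoreE hn eqxx hT; lra.
Qed.

Lemma best_max v b : score inst v b <= score inst v (best v).
Proof.
have hm := m_gt0. have hr0 := r_gt0. have hr1 := hr.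
rewrite !scoreE /best; case hT: (top v).
  rewrite eqxx; case: b => [n|]; last lra.
  case: eqP => _; lra.
rewrite /pickO; case: pickP => [n1 hn1|hno].
  rewrite (negbTE hn1); case: b => [n|]; last lra.
  case: eqP => _; lra.
case: b => [n|]; last lra.
have /eqP -> : n == n0 by apply/negPn/negP => h; have := hno n; rewrite h.
rewrite eqxx; lra.
Qed.

Lemma pi_opt : is_optimal inst pi.
Proof.
have hm := m_gt0. have hr0 := r_gt0.
split.
- move=> v; split; first by move=> a; rewrite /pi ler0n.
  rewrite (bigD1 (best v)) //= /pi eqxx big1 ?addr0 //.
  by move=> a /negbTE ->.
- move=> v a; rewrite /pi; case: eqP => [-> _|_]; first exact: best_max.
  by rewrite ltxx.
- move=> n v v' hoth hx hw; rewrite /Q /pi.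
  case: (Some n =P best v) => [hb|_]; last by rewrite ler0n.
  suff -> : best v' = Some n by rewrite eqxx.
  move: hb; rewrite /best; case hT: (top v) => hb.
    case: hb => hn; subst n.
    rewrite !wbarE eqxx in hw.
    have hT' : top v'.
      apply/negPn/negP => hnt; rewrite /top in hnt hT.
      by rewrite hT (negbTE hnt) in hw; lra.
    move: hx; rewrite /= !Xn0.
    by move: hT hT'; rewrite /top => /eqP -> /eqP ->; rewrite ltxx.
  have hn : n != n0.
    by move: hb; rewrite /pickO; case: pickP => // n1 hn1 [->].
  have hv : v' n0 = v n0 by rewrite hoth // eq_sym.
  by rewrite /top hv -/(top v) hT hb.
Qed.

Lemma welfare_opt pi' : is_optimal inst pi' -> forall v,
  \sum_n Q inst pi' n v * xv inst n (v n) = valw v (best v).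
Proof.
case=> halloc hsupp _ v.
have [hge hsum] := halloc v.
have key : forall a, pi' v a * valw v a = pi' v a * valw v (best v).
  move=> a; have := hge a; rewrite le_eqVlt => /orP[/eqP <-|hpos].
    by rewrite !mul0r.
  by rewrite (maxval v a (hsupp v a hpos)).
rewrite sum_option in hsum.
have -> : \sum_n Q inst pi' n v * xv inst n (v n) = \sum_n pi' v (Some n) * valw v (Some n).
  by [].
under eq_bigr do rewrite key.
rewrite -big_distrl /=.
have hN0 := key None; rewrite /= mulr0 in hN0.
have -> : \sum_n pi' v (Some n) = 1 - pi' v None by rewrite -hsum addrC addKr.
by rewrite mulrBl mul1r -hN0 subr0.
Qed.

Lemma val_inord (x y : nat) : val (@inord x y) = if (y < x.+1)%N then y else 0%N.
Proof. by rewrite /inord val_insubd. Qed.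

Definition mkprof (k : 'I_L.+1) : profile inst :=
  finfun (fun n : 'I_N => (inord k : 'I_(KK n))).
Definition unprof (v : profile inst) : 'I_L.+1 := inord (v n0).

Lemma mkprof_n0 k : (mkprof k n0 : nat) = k.
Proof. by rewrite /mkprof ffunE val_inord ltn_ord. Qed.

Lemma mkprof_n k n : n != n0 -> (mkprof k n : nat) = 0%N.
Proof.
move=> hn; rewrite /mkprof ffunE val_inord.
have -> : (if n == n0 then L else 0%N).+1 = 1%N by rewrite (negbTE hn).
by case: ifP => // ; rewrite ltnS leqn0 => /eqP.
Qed.

Lemma unprofK : cancel unprof mkprof.
Proof.
move=> v; apply/ffunP => n; apply: val_inj.
have hv := ltn_ord (v n).
rewrite /mkprof ffunE val_inord /unprof val_inord.
have hv0 : (v n0 < L.+1)%N := ltn_ord (v n0).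
rewrite hv0.
case: (n =P n0) => [->|/eqP hn]; first by rewrite hv0.
have : (v n < KK n)%N := ltn_ord (v n).
rewrite (KKn n hn) ltnS leqn0 => /eqP hvn.
rewrite -[RHS]/(nat_of_ord (v n)) hvn.
by case: ifP => // h; move: h; rewrite ltnS leqn0 => /eqP.
Qed.

Lemma mkprofK : cancel mkprof unprof.
Proof. by move=> k; apply: val_inj; rewrite /unprof val_inord mkprof_n0 ltn_ord. Qed.

Lemma sum_prof (G : profile inst -> R) :
  \sum_v G v = \sum_(k < L.+1) G (mkprof k).
Proof.
rewrite (reindex mkprof) //; exists unprof => v _; [exact: mkprofK | exact: unprofK].
Qed.

Lemma P_n_0 n : n != n0 -> P n 0 = 1.
Proof. by move=> hn; rewrite /P !Qfn //= subr0. Qed.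

Lemma prob_mk k : prob inst (mkprof k) = P n0 k.
Proof.
rewrite /prob (bigD1 n0) //= mkprof_n0 big1 ?mulr1 // => n hn.
by rewrite mkprof_n // P_n_0.
Qed.

Definition w0 : R := if pickO is Some _ then 1 else 0.

Lemma valw_mk k : valw (mkprof k) (best (mkprof k)) = if (k : nat) == L then r else w0.
Proof.
rewrite /best /top mkprof_n0; case: eqP => [hk|_].
  by rewrite /valw Xn0 mkprof_n0 hk hrhoL.
rewrite /w0 /valw /pickO; case: pickP => // n1 hn1.
by rewrite Xn.
Qed.

Lemma welfare_val : welfare inst pi = c + w0 * (1 - c / r).
Proof.
rewrite /welfare sum_prof.
under eq_bigr do rewrite prob_mk (welfare_opt pi pi_opt) valw_mk.
rewrite big_ord_recr /= eqxx.
under eq_bigr do rewrite (ltn_eqF (ltn_ord _)).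
rewrite -big_distrl /= sumP_lt Qfn0 qBL /P !Qfn0 qBL (qB_big L.+1 (ltnSn L)) subr0.
have hr0 : r != 0 by rewrite gt_eqF // r_gt0.
by rewrite divfK // addrC mulrC.
Qed.

Lemma le_bigmax_seq (f : 'I_N -> R) i (s : seq 'I_N) : i \in s ->
  f i <= \big[Num.max/0]_(n <- s) f n.
Proof.
elim: s => // a s IH; rewrite big_cons in_cons => /orP[/eqP->|h].
  by rewrite le_max lexx.
by rewrite le_max IH ?orbT.
Qed.

Lemma max_mk k : \big[Num.max/0]_n X n (mkprof k n) = rho ^+ k.
Proof.
apply/le_anti/andP; split.
  apply: (big_ind (fun y => y <= rho ^+ k)).
  - by rewrite exprn_ge0 // ltW // rho_gt0.
  - by move=> x y hx hy; rewrite ge_max hx hy.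
  - move=> n _; case: (n =P n0) => [->|/eqP hn]; first by rewrite Xn0 mkprof_n0.
    by rewrite Xn // rhoX_ge1.
have := @le_bigmax_seq (fun n => X n (mkprof k n)) n0 (index_enum 'I_N) (mem_index_enum _).
by rewrite /= Xn0 mkprof_n0.
Qed.

Lemma MSW_val : MSW inst = L'%:R * (1 - rho^-1) + (1 - c / rho) + c.
Proof.
rewrite /MSW sum_prof.
under eq_bigr => k _ do rewrite prob_mk /= max_mk.
rewrite big_ord_recr /= big_ord_recr /=.
have hp := rho_gt0.
have hp0 : rho != 0 by rewrite gt_eqF.
have hpL : rho ^+ L' != 0 by rewrite gt_eqF // exprn_gt0.
have hr0 : r != 0 by rewrite gt_eqF // r_gt0.
have hL : rho ^+ L = r := hrhoL.
have e1 : P n0 L * rho ^+ L = c.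
  rewrite /P !Qfn0 qBL (qB_big L.+1 (ltnSn L)) subr0 hL; exact: divfK.
have e2 : P n0 L' * rho ^+ L' = 1 - c / rho.
  rewrite /P !Qfn0 qBL (qB_lt L' (ltnSn L')) rL'.
  by field; rewrite hp0 hpL.
have e3 : forall k : 'I_L', P n0 k * rho ^+ k = 1 - rho^-1.
  move=> k; have hk := ltn_ord k.
  have hpk : rho ^+ k != 0 by rewrite gt_eqF // exprn_gt0.
  have hk1 : (k.+1 < L)%N by rewrite /L ltnS.
  rewrite /P !Qfn0 (qB_lt k (ltnW hk1)) (qB_lt k.+1 hk1).
  by rewrite exprS; field; rewrite hp0 hpk.
rewrite e1 e2 (eq_bigr _ (fun k _ => e3 k)).
by rewrite sumr_const card_ord mulr_natl.
Qed.

Lemma tilde_opt : is_tilde_opt inst pi.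
Proof.
split; first exact: pi_opt.
move=> pi' hopt; rewrite /welfare; apply: ler_sum => v _.
by rewrite (welfare_opt pi' hopt) (welfare_opt pi pi_opt).
Qed.

Lemma X_le_r n j : (j < KK n)%N -> X n j <= r.
Proof.
rewrite /X /KK; case: (n == n0) => hj; first exact: rhoX_le_r.
by apply: ltW; exact: hr.
Qed.

Lemma X_ge1 n j : 1 <= X n j.
Proof. rewrite /X; case: (n == n0); [exact: rhoX_ge1 | exact: lexx]. Qed.

Lemma X_mono n a b : (b < KK n)%N -> (a < b)%N -> X n a < X n b.
Proof.
rewrite /X /KK; case: (n == n0) => /= hb hab; first by rewrite ltr_eXn2l.
by move: hb hab; rewrite ltnS leqn0 => /eqP ->.
Qed.

Lemma inD : in_D r L.+1 inst.
Proof.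
split.
  move=> n; split; [split|split].
  - by [].
  - by rewrite /= /KK; case: (n == n0).
  - by move=> i; apply: (lt_le_trans ltr01); exact: X_ge1.
  - by move=> i j hij; apply: X_mono.
  - by move=> i; apply: P_gt0.
  - exact: sumP1.
move=> n m' i j /=.
have hx := X_le_r n i (ltn_ord i). have hy := X_ge1 m' j.
have hy0 : 0 < X m' j by apply: lt_le_trans hy.
rewrite ler_pdivrMr //.
apply: (le_trans hx); rewrite ler_peMr //; apply: ltW; have := hr; lra.
Qed.

Lemma ELR_bound eps : 0 < eps -> c < 1 + eps ->
  ((L'.+1%:R * (1 - rho^-1)) - (1 - r^-1)) / (1 + L'.+1%:R * (1 - rho^-1)) - eps
  < ELR inst pi.
Proof.
move=> he hce.
rewrite /ELR welfare_val MSW_val -natr1.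
have hw : 0 <= w0 /\ w0 <= 1.
  by rewrite /w0; case: pickO; split; rewrite ?ler01 ?lexx.
case: hw => hw0 hw1.
have := (@final_ineq R r rho c eps w0 L'%:R hr hrho1 hc1 hce c_lt_r hw0 hw1 (ler0n _ L') he). by [].
Qed.
End Constr.

Theorem proposition9 (R : realType) (r : R) (N K : nat) :
  1 < r -> (1 <= N)%N -> (2 <= K)%N ->
  forall eps : R, 0 < eps ->
  exists I : instance R N, in_D r K I /\
    exists pi : alloc I, is_tilde_opt I pi /\
      (gamma_star r K - (1 - r^-1)) / (1 + gamma_star r K) - eps < ELR I pi.
Proof.
move=> hr hN hK eps he.
case: K hK => [|[|L']] // _.
pose rho := powR r (L'.+1%:R^-1).
have hr0 : 0 <= r by apply: ltW; apply: lt_trans hr.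
have hrho0 : 0 <= rho := powR_ge0 _ _.
have hrhoL : rho ^+ L'.+1 = r.
  by rewrite /rho -powR_mulrn // -powRrM mulVf ?pnatr_eq0 // powRr1.
have hrho1 : 1 < rho.
  rewrite ltNge; apply/negP => h; have := exprn_ile1 L'.+1 hrho0 h.
  rewrite hrhoL; lra.
pose d := Num.min eps (rho - 1) / 2.
have hm0 : 0 < Num.min eps (rho - 1) by rewrite lt_min he subr_gt0 hrho1.
have hmE : Num.min eps (rho - 1) <= eps by rewrite ge_min lexx.
have hmR : Num.min eps (rho - 1) <= rho - 1 by rewrite ge_min lexx orbT.
have hd0 : 0 < d by rewrite /d; lra.
have hde : d < eps by rewrite /d; lra.
have hdr : d < rho - 1 by rewrite /d; lra.
pose c := 1 + d.
have hc1 : 1 < c by rewrite /c; lra.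
have hcr : c < rho by rewrite /c; lra.
have hce : c < 1 + eps by rewrite /c; lra.
exists (inst R r N L' rho c hN); split.
  exact: (@inD R r N L' rho c hr hN hrho1 hrhoL hc1 hcr).
exists (pi R r N L' rho c hN); split.
  exact: (@tilde_opt R r N L' rho c hr hN hrho1 hrhoL hc1 hcr).
have := @ELR_bound R r N L' rho c hr hN hrho1 hrhoL hc1 hcr eps he hce.
by rewrite /gamma_star /= powRN.
Qed.
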